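(* Let $\alpha$ be a unit-speed curve in $\mathbb{R}^3$ with nonvanishing curvature, let $\alpha_T$ be its tangent indicatrix, and let $\beta$ be a Bertrand-direction curve of $\alpha_T$ (an $X$-direction curve of $\alpha_T$ with $N_\beta=N_T$). Then: (i) $\alpha_T$ is a spherical helix if and only if $\beta$ is a helix; (ii) $\alpha_T$ is a spherical slant helix if and only if $\beta$ is a slant helix.
   Context: Let $\alpha:I\subset\mathbb{R}\to\mathbb{R}^3$ be a unit-speed curve with curvature $\kappa>0$, torsion $\tau$ and Frenet frame $\{T,N,B\}$. The tangent indicatrix of $\alpha$ is the curve $\alpha_T=T$ on the unit sphere. Its arc length is $s_T=\int\kappa\,ds$. Its Frenet apparatus is $\{T_T,N_T,B_T,\kappa_T,\tau_T\}$, with $\frac{dT_T}{ds_T}=\kappa_TN_T$, $\frac{dN_T}{ds_T}=-\kappa_TT_T+\tau_TB_T$ and $\frac{dB_T}{ds_T}=-\tau_TN_T$. Let $x,y,z$ be real functions of $s_T$ with $x^2+y^2+z^2=1$, and set $X=xT_T+yN_T+zB_T$. An integral curve $\beta$ of $X$, meaning $d\beta/ds_T=X$, is an $X$-direction curve of $\alpha_T$. It is regarded as a unit-speed Frenet curve with frame $\{T_\beta=X,N_\beta,B_\beta\}$, curvature $\kappa_\beta>0$ and torsion $\tau_\beta$. $\beta$ is a Bertrand-direction curve of $\alpha_T$ if $N_\beta=N_T$. A curve with curvature $k>0$ and torsion $t$ is a helix if its unit tangent makes a constant angle with a fixed line; equivalently, $t/k$ is constant. It is a slant helix if its principal normal makes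 a constant angle with a fixed line; equivalently, $\frac{k^2}{(k^2+t^2)^{3/2}}(t/k)'$ is constant, where $'$ is the derivative with respect to arc length. A spherical helix (respectively, spherical slant helix) is a helix (respectively, slant helix) lying on a sphere. *)

(* Defs.v *)
From Stdlib Require Import Reals.
From Coquelicot Require Import Coquelicot.
Open Scope R_scope.

Definition vec : Type := (R * R * R)%type.
Definition v1 (v : vec) : R := fst (fst v).
Definition v2 (v : vec) : R := snd (fst v).
Definition v3 (v : vec) : R := snd v.
Definition mkv (a b c : R) : vec := (a, b, c).
Definition vadd (u v : vec) : vec := mkv (v1 u + v1 v) (v2 u + v2 v) (v3 u + v3 v).
Definition vscal (a : R) (v : vec) : vec := mkv (a * v1 v) (a * v2 v) (a * v3 v).
Definition vsub (u v : vec) : vec := vadd u (vscal (-1) v).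
Definition dot (u v : vec) : R := v1 u * v1 v + v2 u * v2 v + v3 u * v3 v.
Definition cross (u v : vec) : vec :=
  mkv (v2 u * v3 v - v3 u * v2 v)
      (v3 u * v1 v - v1 u * v3 v)
      (v1 u * v2 v - v2 u * v1 v).
Definition vnorm (v : vec) : R := sqrt (dot v v).

Definition has_vderiv (f : R -> vec) (s : R) (v : vec) : Prop :=
  is_derive (fun t => v1 (f t)) s (v1 v) /\
  is_derive (fun t => v2 (f t)) s (v2 v) /\
  is_derive (fun t => v3 (f t)) s (v3 v).

Definition rbar_ointerval (a b : Rbar) (s : R) : Prop :=
  Rbar_lt a s /\ Rbar_lt s b.

Definition frenet_curve (D : R -> Prop) (c t n b : R -> vec) (k tau : R -> R) : Prop :=
  forall s, D s ->
    has_vderiv c s (t s) /\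
    has_vderiv t s (vscal (k s) (n s)) /\
    has_vderiv n s (vadd (vscal (- k s) (t s)) (vscal (tau s) (b s))) /\
    has_vderiv b s (vscal (- tau s) (n s)) /\
    dot (t s) (t s) = 1 /\ dot (n s) (n s) = 1 /\ dot (t s) (n s) = 0 /\
    b s = cross (t s) (n s) /\
    0 < k s.

Definition helix (D : R -> Prop) (t : R -> vec) : Prop :=
  exists u : vec, vnorm u = 1 /\ exists c : R, forall s, D s -> dot (t s) u = c.

Definition slant_helix (D : R -> Prop) (n : R -> vec) : Prop :=
  exists u : vec, vnorm u = 1 /\ exists c : R, forall s, D s -> dot (n s) u = c.

Definition spherical (D : R -> Prop) (c : R -> vec) : Prop :=
  exists (m : vec) (r : R), 0 < r /\ forall s, D s -> vnorm (vsub (c s) m) = r.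

(* Main.v *)
Require Import Defs.
From Stdlib Require Import Reals Lra Classical.
From Coquelicot Require Import Coquelicot.
Open Scope R_scope.

Lemma in_between (a b : Rbar) s1 s2 x :
  rbar_ointerval a b s1 -> rbar_ointerval a b s2 ->
  Rmin s1 s2 <= x <= Rmax s1 s2 -> rbar_ointerval a b x.
Proof.
  unfold rbar_ointerval, Rmin, Rmax; intros [H1 H2] [H3 H4] H5.
  destruct (Rle_dec s1 s2);
  destruct a, b; simpl in *; split; try tauto; lra.
Qed.

Lemma loc_int (a b : Rbar) s : rbar_ointerval a b s ->
  locally s (rbar_ointerval a b).
Proof.
  intros [H1 H2].
  pose proof (open_Rbar_gt' (Finite s) a H1) as A.
  pose proof (open_Rbar_lt' (Finite s) b H2) as B.
  simpl in A, B.
  apply (filter_and _ _ A) in B.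
  eapply filter_imp; [|exact B]. intros t [? ?]. split; assumption.
Qed.

Lemma const_ab (a b : Rbar) (h : R -> R) :
  (forall s, rbar_ointerval a b s -> is_derive h s 0) ->
  forall s1 s2, rbar_ointerval a b s1 -> rbar_ointerval a b s2 -> h s1 = h s2.
Proof.
  intros Hd s1 s2 H1 H2.
  destruct (MVT_gen h s1 s2 (fun _ => 0)) as [c [_ Hc]].
  - intros x Hx. apply Hd. apply (in_between a b s1 s2 x H1 H2). simpl in Hx. lra.
  - intros x Hx. apply continuity_pt_filterlim. refine (ex_derive_continuous (K:=R_AbsRing) (V:=R_NormedModule) h x _).
    exists 0. apply Hd. apply (in_between a b s1 s2 x H1 H2). exact Hx.
  - lra.
Qed.

Lemma deriv_zero_of_const (a b : Rbar) (h : R -> R) c s d :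
  rbar_ointerval a b s -> (forall t, rbar_ointerval a b t -> h t = c) ->
  is_derive h s d -> d = 0.
Proof.
  intros Hs Hc Hd.
  assert (is_derive h s 0).
  { apply (is_derive_ext_loc (fun _ => c)).
    - eapply filter_imp; [|apply (loc_int a b s Hs)]. intros t Ht. symmetry; auto.
    - apply (is_derive_const c s). }
  apply is_derive_unique in Hd. apply is_derive_unique in H. congruence.
Qed.

Lemma chain (g sT : R -> R) s dg k :
  is_derive g (sT s) dg -> is_derive sT s k ->
  is_derive (fun t => g (sT t)) s (dg * k).
Proof.
  intros H1 H2. pose proof (is_derive_comp g sT s dg k H1 H2) as H.
  replace (dg * k) with (scal k dg); auto.
  unfold scal; simpl; unfold mult; simpl. ring.
Qed.

Lemma sc_der (g : R -> R) u d c : is_derive g u d ->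
  is_derive (fun t => g t * c) u (d * c).
Proof. intros H. exact (is_derive_scal_l (K:=R_AbsRing) (V:=R_NormedModule) g u d c H). Qed.

Lemma pl_der (g h : R -> R) u d e : is_derive g u d -> is_derive h u e ->
  is_derive (fun t => g t + h t) u (d + e).
Proof. intros H1 H2. exact (is_derive_plus (K:=R_AbsRing) (V:=R_NormedModule) g h u d e H1 H2). Qed.

Lemma dot_deriv (f : R -> vec) u v w :
  has_vderiv f u v -> is_derive (fun t => dot (f t) w) u (dot v w).
Proof.
  intros [H1 [H2 H3]]. unfold dot.
  apply pl_der. apply pl_der.
  all: apply sc_der; assumption.
Qed.

Lemma dot_scal k v w : dot (vscal k v) w = k * dot v w.
Proof. unfold dot, vscal, mkv, v1, v2, v3; simpl; ring. Qed.

Lemma vsub0 v : dot (vsub v (mkv 0 0 0)) (vsub v (mkv 0 0 0)) = dot v v.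
Proof. unfold dot, vsub, vadd, vscal, mkv, v1, v2, v3; simpl; ring. Qed.

Theorem theorem5p5
  (a b : Rbar) (Hab : Rbar_lt a b)
  (alpha T N B : R -> vec) (kappa tau : R -> R)
  (Halpha : frenet_curve (rbar_ointerval a b) alpha T N B kappa tau)
  (sT : R -> R)
  (HsT : forall s, rbar_ointerval a b s -> is_derive sT s (kappa s))
  (alphaT : R -> vec)
  (HalphaT : forall s, rbar_ointerval a b s -> alphaT (sT s) = T s)
  (TT NT BT : R -> vec) (kappaT tauT : R -> R)
  (HFT : frenet_curve (fun u => exists s, rbar_ointerval a b s /\ sT s = u)
           alphaT TT NT BT kappaT tauT)
  (x y z : R -> R)
  (Hxyz : forall u, (exists s, rbar_ointerval a b s /\ sT s = u) ->
            x u ^ 2 + y u ^ 2 + z u ^ 2 = 1)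
  (beta Nbeta Bbeta : R -> vec) (kappabeta taubeta : R -> R)
  (Hbeta : frenet_curve (fun u => exists s, rbar_ointerval a b s /\ sT s = u)
             beta
             (fun u => vadd (vadd (vscal (x u) (TT u)) (vscal (y u) (NT u)))
                            (vscal (z u) (BT u)))
             Nbeta Bbeta kappabeta taubeta)
  (HBertrand : forall u, (exists s, rbar_ointerval a b s /\ sT s = u) -> Nbeta u = NT u) :
  let J := fun u => exists s, rbar_ointerval a b s /\ sT s = u in
  ((spherical J alphaT /\ helix J TT) <->
     helix J (fun u => vadd (vadd (vscal (x u) (TT u)) (vscal (y u) (NT u)))
                            (vscal (z u) (BT u)))) /\
  ((spherical J alphaT /\ slant_helix J NT) <-> slant_helix J Nbeta).
Proof.
  intros J.
  set (X := fun u => vadd (vadd (vscal (x u) (TT u)) (vscal (y u) (NT u)))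
                            (vscal (z u) (BT u))) in *.
  assert (HJ : forall s, rbar_ointerval a b s -> J (sT s)) by (intros s Hs; exists s; auto).
  assert (Sph : spherical J alphaT).
  { exists (mkv 0 0 0), 1. split; [lra|].
    intros u [s [Hs <-]]. unfold vnorm. rewrite vsub0, HalphaT by exact Hs.
    destruct (Halpha s Hs) as [_ [_ [_ [_ [H _]]]]]. rewrite H. apply sqrt_1. }
  assert (DA : forall s w, rbar_ointerval a b s ->
     is_derive (fun t => dot (TT (sT t)) w) s (kappaT (sT s) * dot (NT (sT s)) w * kappa s)).
  { intros s w Hs. apply (chain (fun u => dot (TT u) w) sT); [|apply HsT; exact Hs].
    destruct (HFT (sT s) (HJ s Hs)) as [_ [H _]].
    rewrite <- dot_scal. apply dot_deriv. exact H. }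
  assert (DB : forall s w, rbar_ointerval a b s ->
     is_derive (fun t => dot (X (sT t)) w) s (kappabeta (sT s) * dot (NT (sT s)) w * kappa s)).
  { intros s w Hs. apply (chain (fun u => dot (X u) w) sT); [|apply HsT; exact Hs].
    destruct (Hbeta (sT s) (HJ s Hs)) as [_ [H _]].
    rewrite <- HBertrand by (apply HJ; exact Hs).
    rewrite <- dot_scal. apply dot_deriv. exact H. }
  assert (Pk : forall s, rbar_ointerval a b s -> 0 < kappa s /\ 0 < kappaT (sT s) /\ 0 < kappabeta (sT s)).
  { intros s Hs. destruct (Halpha s Hs) as [_ [_ [_ [_ [_ [_ [_ [_ H1]]]]]]]].
    destruct (HFT (sT s) (HJ s Hs)) as [_ [_ [_ [_ [_ [_ [_ [_ H2]]]]]]]].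
    destruct (Hbeta (sT s) (HJ s Hs)) as [_ [_ [_ [_ [_ [_ [_ [_ H3]]]]]]]].
    auto. }
  assert (Trans : forall (F G : R -> vec) (kF kG : R -> R) w c,
     (forall s, rbar_ointerval a b s -> is_derive (fun t => dot (F (sT t)) w) s (kF (sT s) * dot (NT (sT s)) w * kappa s)) ->
     (forall s, rbar_ointerval a b s -> is_derive (fun t => dot (G (sT t)) w) s (kG (sT s) * dot (NT (sT s)) w * kappa s)) ->
     (forall s, rbar_ointerval a b s -> 0 < kF (sT s)) ->
     (forall u, J u -> dot (F u) w = c) ->
     exists c', forall u, J u -> dot (G u) w = c').
  { intros F G kF kG w c DF DG PF HF.
    assert (N0 : forall s, rbar_ointerval a b s -> dot (NT (sT s)) w = 0).
    { intros s Hs.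
      pose proof (deriv_zero_of_const a b _ c s _ Hs (fun t Ht => HF _ (HJ t Ht)) (DF s Hs)) as E.
      destruct (Pk s Hs) as [P1 _]. pose proof (PF s Hs) as P2.
      destruct (Rmult_integral _ _ E) as [E1|E1]; [|lra].
      destruct (Rmult_integral _ _ E1) as [E2|E2]; [lra|exact E2]. }
    destruct (classic (exists s0, rbar_ointerval a b s0)) as [[s0 Hs0]|Hn].
    - exists (dot (G (sT s0)) w). intros u [s [Hs <-]].
      apply (const_ab a b (fun t => dot (G (sT t)) w)); auto.
      intros t Ht. pose proof (DG t Ht) as D. rewrite N0 in D by exact Ht.
      replace 0 with (kG (sT t) * 0 * kappa t) by ring. exact D.
    - exists 0. intros u [s [Hs _]]. exfalso. apply Hn. exists s; exact Hs. }
  split; split.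
  - intros [_ [w [Hw [c Hc]]]]. exists w. split; [exact Hw|].
    apply (Trans TT X kappaT kappabeta w c); auto.
    intros s Hs; apply (Pk s Hs).
  - intros [w [Hw [c Hc]]]. split; [exact Sph|]. exists w. split; [exact Hw|].
    apply (Trans X TT kappabeta kappaT w c); auto.
    intros s Hs; apply (Pk s Hs).
  - intros [_ [w [Hw [c Hc]]]]. exists w. split; [exact Hw|]. exists c.
    intros u Hu. rewrite HBertrand by exact Hu. auto.
  - intros [w [Hw [c Hc]]]. split; [exact Sph|]. exists w. split; [exact Hw|]. exists c.
    intros u Hu. rewrite <- HBertrand by exact Hu. auto.
Qed.
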